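(* $\textsc{SampHLF}\in(\textsc{Samp}\,\mathsf{NC}^0)^{\textsc{RelHLF}}$: there is a family of constant-depth bounded fan-in classical circuits with uniformly random input bits and oracle gates to any solver of $\textsc{RelHLF}$ which solves $\textsc{SampHLF}$ exactly.
   Context: An instance consists of the adjacency matrix $A\in\{0,1\}^{n\times n}$ of a simple undirected graph on $n$ vertices that is a subgraph of a 2D grid, and a vector $b\in\{0,1\}^n$. Consider the graph state $|G\rangle=2^{-n/2}\sum_x\prod_{(u,v)\in E}(-1)^{x_ux_v}|x\rangle$ of this graph, and measure qubit $i$ in the $X$ basis if $b_i=0$ and in the $Y$ basis if $b_i=1$ (equivalently apply $H$, resp. $HR_z$ with $R_z=\mathrm{diag}(1,i)$, and measure in the computational basis), giving an outcome string in $\{0,1\}^n$. $\textsc{RelHLF}$ (relation version of the 2D Hidden Linear Function problem): output any outcome string that occurs with nonzero probability. $\textsc{SampHLF}$ (sampling version): output a string distributed exactly according to the measurement outcome distribution. *)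

(* Defs.v *)
From HB Require Import structures.
From mathcomp Require Import all_boot all_order all_algebra all_field.
Set Implicit Arguments. Unset Strict Implicit. Unset Printing Implicit Defensive.
Import Order.TTheory GRing.Theory Num.Theory.
Local Open Scope ring_scope.

(* An instance of size N lives on the N x N grid: n = N*N vertices, vertex u
   has coordinates (u %/ N, u %% N). *)
Definition grid_adj (N : nat) (u v : nat) : bool :=
  ((u %/ N == v %/ N)%N && (((u %% N).+1 == v %% N)%N || ((v %% N).+1 == u %% N)%N))
  || ((u %% N == v %% N)%N && (((u %/ N).+1 == v %/ N)%N || ((v %/ N).+1 == u %/ N)%N)).

Definition adjmat (N : nat) := 'I_(N * N) -> 'I_(N * N) -> bool.
Definition bitvec (N : nat) := 'I_(N * N) -> bool.

Definition valid_instance (N : nat) (A : adjmat N) : Prop :=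
  (forall u v, A u v = A v u) /\ (forall u, A u u = false) /\
  (forall u v, A u v -> grid_adj N u v).

Definition b2o (x : bool) : 'I_2 := if x then ord_max else ord0.

Definition Hmx : 'M[algC]_2 := (sqrtC 2)^-1 *: \matrix_(i < 2, j < 2) (-1) ^+ (i * j)%N.
Definition Rzmx : 'M[algC]_2 := \matrix_(i < 2, j < 2) (if i == j then 'i ^+ i else 0).
(* basis change before computational-basis measurement: H (X basis) or H R_z (Y basis) *)
Definition Umx (bi : bool) : 'M[algC]_2 := if bi then Hmx *m Rzmx else Hmx.

(* amplitude <x|G> of the graph state *)
Definition graph_amp (N : nat) (A : adjmat N) (x : {ffun 'I_(N * N) -> bool}) : algC :=
  (sqrtC 2)^-1 ^+ (N * N) *
  \prod_(u : 'I_(N * N)) \prod_(v : 'I_(N * N) | (u < v)%N && A u v)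
     (-1) ^+ (x u && x v).

(* amplitude of outcome z after applying (x) U_{b_i} *)
Definition outcome_amp (N : nat) (A : adjmat N) (b z : bitvec N) : algC :=
  \sum_(x : {ffun 'I_(N * N) -> bool})
     (\prod_(u : 'I_(N * N)) Umx (b u) (b2o (z u)) (b2o (x u))) * graph_amp A x.

Definition outcome_prob (N : nat) (A : adjmat N) (b z : bitvec N) : algC :=
  `|outcome_amp A b z| ^+ 2.

Definition oracle := forall N : nat, adjmat N -> bitvec N -> bitvec N.

(* O solves RelHLF: on every valid instance it returns an outcome of nonzero probability
   (on invalid queries it may return anything). *)
Definition solves_RelHLF (O : oracle) : Prop :=
  forall N (A : adjmat N) (b : bitvec N), valid_instance A ->
    outcome_prob A b (O N A b) != 0.

(* Wires are indices into the list of all wire values: first the circuit inputs,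
   then the outputs of the gates in order. References to not-yet-computed wires
   read the constant false (depth 0). *)
Inductive gate : Type :=
| GBool of (bool -> bool -> bool) & nat & nat
| GOracle of nat & seq nat.                      (* RelHLF query of grid size N' *)

Record circuit := Circuit { nrand : nat; gates : seq gate; outs : seq nat }.

Definition n_of (N : nat) := (N * N)%N.

Definition decA (N : nat) (q : seq bool) : adjmat N :=
  fun u v => nth false q (u * n_of N + v).
Definition decb (N : nat) (q : seq bool) : bitvec N :=
  fun u => nth false q (n_of N * n_of N + u).

Definition gate_out (O : oracle) (vals : seq bool) (g : gate) : seq bool :=
  match g with
  | GBool f i j => [:: f (nth false vals i) (nth false vals j)]
  | GOracle N' ins =>
      let q := map (nth false vals) ins in
      [seq O N' (@decA N' q) (@decb N' q) i | i <- enum 'I_(N' * N')]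
  end.

Definition eval_wires (O : oracle) (inp : seq bool) (gs : seq gate) : seq bool :=
  foldl (fun vals g => vals ++ gate_out O vals g) inp gs.

Definition gate_depth (ds : seq nat) (g : gate) : seq nat :=
  match g with
  | GBool _ i j => [:: (maxn (nth 0 ds i) (nth 0 ds j)).+1]
  | GOracle N' ins => nseq (N' * N') (\max_(i <- ins) nth 0 ds i).+1
  end.

Definition wire_depths (ninp : nat) (gs : seq gate) : seq nat :=
  foldl (fun ds g => ds ++ gate_depth ds g) (nseq ninp 0%N) gs.

Definition input_len (N : nat) (C : circuit) : nat := (n_of N * n_of N + n_of N + nrand C)%N.

Definition circuit_depth (N : nat) (C : circuit) : nat :=
  \max_(o <- outs C) nth 0 (wire_depths (input_len N C) (gates C)) o.

Definition gate_size (g : gate) : nat :=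
  match g with GBool _ _ _ => 3 | GOracle _ ins => (size ins).+1 end.

Definition circuit_size (C : circuit) : nat :=
  (nrand C + \sum_(g <- gates C) gate_size g + size (outs C))%N.

Definition encode (N : nat) (A : adjmat N) (b : bitvec N) (r : seq bool) : seq bool :=
  [seq A u v | u <- enum 'I_(N * N), v <- enum 'I_(N * N)]
  ++ [seq b u | u <- enum 'I_(N * N)] ++ r.

Definition circ_output (C : circuit) (O : oracle) (inp : seq bool) : seq bool :=
  map (nth false (eval_wires O inp (gates C))) (outs C).

Definition circ_prob (N : nat) (C : circuit) (O : oracle) (A : adjmat N) (b z : bitvec N)
  : algC :=
  (#|[set r : (nrand C).-tuple bool |
        circ_output C O (encode A b r) == [seq z u | u <- enum 'I_(N * N)]]|)%:R
  / (2 ^ nrand C)%:R.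

(* Main.v *)
Require Import Defs.
From mathcomp Require Import all_boot all_order all_algebra all_field.
From mathcomp Require Import ring zify.
From Stdlib Require Import FunctionalExtensionality.
Import GRing.Theory Num.Theory.

Section Run.
Variables (T : Type) (x0 : T) (F : seq T -> gate -> seq T).
Definition run vals gs := foldl (fun acc g => acc ++ F acc g) vals gs.

Lemma run_cat vals g1 g2 : run vals (g1 ++ g2) = run (run vals g1) g2.
Proof. by rewrite /run foldl_cat. Qed.

Lemma run_prefix gs vals i : i < size vals -> nth x0 (run vals gs) i = nth x0 vals i.
Proof.
elim: gs vals => //= g gs IH vals H.
by rewrite IH ?nth_cat ?H // size_cat ltn_addr.
Qed.

Hypothesis F1 : forall acc g, size (F acc g) = 1.

Lemma run_size gs vals : size (run vals gs) = size vals + size gs.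
Proof.
elim: gs vals => [|g gs IH] vals /=; first by rewrite addn0.
by rewrite IH size_cat F1 addn1 addSnnS.
Qed.

Lemma run_nth gs vals k gd : k < size gs ->
  nth x0 (run vals gs) (size vals + k) = nth x0 (F (run vals (take k gs)) (nth gd gs k)) 0.
Proof.
move=> hk.
have sz : size (run vals (take k gs)) = size vals + k.
  by rewrite run_size size_take hk.
rewrite -{1}(cat_take_drop k gs) run_cat (drop_nth gd) //= run_prefix.
  by rewrite nth_cat sz ltnn subnn.
by rewrite size_cat sz F1 addn1.
Qed.

Lemma run_nth_prefix gs vals k i : k <= size gs -> i < size vals + k ->
  nth x0 (run vals gs) i = nth x0 (run vals (take k gs)) i.
Proof.
move=> hk hi.
rewrite -{1}(cat_take_drop k gs) run_cat run_prefix //.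
rewrite run_size size_take; case: ifP => // /negbT; rewrite -leqNgt => h.
have e : size gs = k by apply/anti_leq; rewrite h hk.
by rewrite e.
Qed.
End Run.
Arguments run {T}.

Lemma run_ext (T : Type) (F F' : seq T -> gate -> seq T) (P : pred gate) vals (gs : seq gate) :
  all P gs -> (forall (acc : seq T) (g : gate), P g -> F acc g = F' acc g) ->
  run F vals gs = run F' vals gs.
Proof.
elim: gs vals => //= g gs IH vals /andP [hg hs] H.
by rewrite H // IH.
Qed.

Lemma nth_allpairs_gen (S T R : Type) (f : S -> T -> R) (s : seq S) (t : seq T) x0 y0 z0 i j :
  i < size s -> j < size t ->
  nth z0 [seq f x y | x <- s, y <- t] (i * size t + j) = f (nth x0 s i) (nth y0 t j).
Proof.
elim: s i => // x s IH [|i] /= Hi Hj; rewrite nth_cat size_map.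
  by rewrite mul0n add0n Hj (nth_map y0).
rewrite mulSn -addnA ltnNge leq_addr /= addKn IH //.
Qed.

Definition nb (N u : nat) : seq nat := [seq v <- iota 0 (N*N) | grid_adj N u v].
Definition gdum : gate := GBool (fun _ _ => false) 0 0.
Definition slot (N u j : nat) : gate :=
  if j < size (nb N u) then
    GBool andb (u * (N*N) + nth 0 (nb N u) j) ((N*N)*(N*N) + N*N + nth 0 (nb N u) j)
  else gdum.
Definition mm N := (N*N)*(N*N) + N*N + N*N.
Definition wi N u k := mm N + N*N + (u*10+k).
Definition block (N u : nat) : seq gate :=
  let n := N*N in
  [:: GBool andb (n*n+u) (n*n+n+u); GBool addb (mm N + u) (wi N u 0); slot N u 0;
      GBool addb (wi N u 1) (wi N u 2); slot N u 1; GBool addb (wi N u 3) (wi N u 4);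
      slot N u 2; GBool addb (wi N u 5) (wi N u 6); slot N u 3; GBool addb (wi N u 7) (wi N u 8)].
Definition gatef N i := nth gdum (block N (i %/ 10)) (i %% 10).
Definition Gs N := mkseq (gatef N) ((N*N)*10).
Definition Circ N : circuit :=
  Circuit (N*N) (GOracle N (iota 0 (N*N*(N*N) + N*N)) :: Gs N)
          [seq wi N u 9 | u <- iota 0 (N*N)].

Lemma gate_out1 O acc g : (exists f p q, g = GBool f p q) -> size (gate_out O acc g) = 1.
Proof. by case=> f [p [q ->]]. Qed.

Definition isb (g : gate) := if g is GBool _ _ _ then true else false.

Lemma isbP g : isb g -> exists f p q, g = GBool f p q.
Proof. by case: g => // f p q _; exists f, p, q. Qed.

Lemma slot_isb N u j : isb (slot N u j).
Proof. by rewrite /slot; case: ifP. Qed.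

Lemma gatef_isb N i : isb (gatef N i).
Proof.
rewrite /gatef; set k := i %% 10; set u := i %/ 10.
have H : all isb (block N u).
  by rewrite /block /= !slot_isb.
move: H; elim: (block N u) k => [|g s IH] [|k] //=; first by case/andP.
by case/andP => _ /IH.
Qed.

Section Eval.
Variables (N : nat) (O : oracle) (A : adjmat N) (b : bitvec N) (r : (N*N).-tuple bool).
Local Notation n := (N*N).
Local Notation inp := (encode A b r).

Lemma size_inp : size inp = mm N.
Proof. by rewrite /encode !size_cat size_allpairs size_map size_tuple !size_enum_ord /mm addnA. Qed.

Lemma inp_A (u v : 'I_n) : nth false inp (u*n+v) = A u v.
Proof.
have hu := ltn_ord u; have hv := ltn_ord v.
rewrite /encode nth_cat size_allpairs size_enum_ord ifT; last by nia.
have := @nth_allpairs_gen _ _ _ A (enum 'I_n) (enum 'I_n) u v false u v.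
by rewrite size_enum_ord !nth_ord_enum => ->.
Qed.

Lemma inp_b (u : 'I_n) : nth false inp (n*n+u) = b u.
Proof.
have hu := ltn_ord u.
rewrite /encode nth_cat size_allpairs size_enum_ord ltnNge leq_addr /= addKn.
by rewrite nth_cat size_map size_enum_ord hu (nth_map u) ?size_enum_ord // nth_ord_enum.
Qed.

Lemma inp_r (u : 'I_n) : nth false inp (n*n+n+u) = tnth r u.
Proof.
have hu := ltn_ord u.
rewrite /encode nth_cat size_allpairs size_enum_ord ltnNge -addnA leq_addr /= addKn.
by rewrite nth_cat size_map size_enum_ord ltnNge leq_addr /= addKn (tnth_nth false).
Qed.

Local Notation q := (map (nth false inp) (iota 0 (n*n+n))).

Lemma decA_q : @decA N q = A.
Proof.
apply: functional_extensionality => u; apply: functional_extensionality => v.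
have hu := ltn_ord u; have hv := ltn_ord v.
rewrite /decA /n_of (nth_map 0) ?size_iota ?nth_iota; try nia.
by rewrite add0n inp_A.
Qed.

Lemma decb_q : @decb N q = b.
Proof.
apply: functional_extensionality => u.
have hu := ltn_ord u.
rewrite /decb /n_of (nth_map 0) ?size_iota ?nth_iota; try nia.
by rewrite add0n inp_b.
Qed.

End Eval.

Lemma Gs_isb N : all isb (Gs N).
Proof. rewrite /Gs /mkseq all_map; apply/allP => i _; exact: gatef_isb. Qed.

Lemma size_Gs N : size (Gs N) = (N*N)*10.
Proof. by rewrite size_mkseq. Qed.

Definition goutb (O : oracle) (acc : seq bool) (g : gate) :=
  if isb g then gate_out O acc g else [:: false].

Lemma goutb1 O acc g : size (goutb O acc g) = 1.
Proof. by rewrite /goutb; case: g. Qed.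

Lemma goutbE O acc f p p' :
  nth false (goutb O acc (GBool f p p')) 0 = f (nth false acc p) (nth false acc p').
Proof. by []. Qed.

Section Eval2.
Variables (N : nat) (O : oracle) (A : adjmat N) (b : bitvec N) (r : (N*N).-tuple bool).
Local Notation n := (N*N).
Local Notation inp := (encode A b r).
Definition S_or := [seq O N A b i | i <- enum 'I_n].
Definition V0 := inp ++ S_or.
Definition Ev := run (goutb O) V0 (Gs N).

Lemma size_V0 : size V0 = mm N + n.
Proof. by rewrite size_cat size_inp size_map size_enum_ord. Qed.

Lemma eval_E : eval_wires O inp (gates (Circ N)) = Ev.
Proof.
rewrite /eval_wires /Ev /V0 /S_or /=.
rewrite decA_q decb_q.
rewrite -/(run (gate_out O) _ _); apply: (@run_ext _ _ _ isb); first exact: Gs_isb.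
by move=> acc g hg; rewrite /goutb hg.
Qed.

Lemma E_low i : i < mm N + n -> nth false Ev i = nth false V0 i.
Proof. by move=> h; rewrite /Ev run_prefix // size_V0. Qed.

Lemma E_inp i : i < mm N -> nth false Ev i = nth false inp i.
Proof.
move=> h; rewrite E_low ?nth_cat ?size_inp ?h //; exact: ltn_addr.
Qed.

Lemma E_s (u : 'I_n) : nth false Ev (mm N + u) = O N A b u.
Proof.
rewrite E_low ?ltn_add2l // /V0 nth_cat size_inp ltnNge leq_addr /= addKn.
by rewrite (nth_map u) ?size_enum_ord // nth_ord_enum.
Qed.

Lemma nth_Gs i : i < n*10 -> nth gdum (Gs N) i = gatef N i.
Proof. by move=> hi; rewrite /Gs nth_mkseq. Qed.

Lemma E_gate i f p p' : i < n*10 -> gatef N i = GBool f p p' ->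
  p < mm N + n + i -> p' < mm N + n + i ->
  nth false Ev (mm N + n + i) = f (nth false Ev p) (nth false Ev p').
Proof.
move=> hi hg hp hp'.
have P1 j : j < mm N + n + i ->
    nth false Ev j = nth false (run (goutb O) V0 (take i (Gs N))) j.
  move=> hj; apply: run_nth_prefix; first exact: goutb1.
    by rewrite size_Gs ltnW.
  by rewrite size_V0.
rewrite (P1 p hp) (P1 p' hp') /Ev -size_V0.
rewrite (@run_nth _ false _ (goutb1 O) _ _ _ gdum); last by rewrite size_Gs.
by rewrite nth_Gs // hg goutbE.
Qed.

End Eval2.

Lemma grid_cand N u v : grid_adj N u v -> v \in [:: u.+1; u.-1; u + N; u - N].
Proof.
rewrite /grid_adj !inE.
have hu := divn_eq u N; have hv := divn_eq v N.
move: (u %/ N) (u %% N) (v %/ N) (v %% N) hu hv => a c a' c' hu hv.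
case/orP => /andP [/eqP e /orP [] /eqP e'].
- apply/orP; left; apply/eqP; lia.
- apply/orP; right; apply/orP; left; apply/eqP; lia.
- do 2 (apply/orP; right); apply/orP; left; apply/eqP; subst; nia.
- do 3 (apply/orP; right); apply/eqP; subst; nia.
Qed.

Lemma nb_size N u : size (nb N u) <= 4.
Proof.
apply: (@leq_trans (size [:: u.+1; u.-1; u + N; u - N])) => //.
apply: uniq_leq_size; first by rewrite filter_uniq // iota_uniq.
by move=> v; rewrite mem_filter => /andP [/grid_cand].
Qed.

Lemma nb_lt N u j : j < size (nb N u) -> nth 0 (nb N u) j < N * N.
Proof.
move=> hj; have := mem_nth 0 hj; rewrite mem_filter mem_iota => /andP [_ /andP [_]].
by rewrite add0n.
Qed.

Lemma nb_sum N (A : adjmat N) (g : 'I_(N*N) -> bool) (u : 'I_(N*N)) :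
  (forall v, A u v -> grid_adj N u v) ->
  \big[addb/false]_(v : 'I_(N*N)) (A u v && g v) =
  \big[addb/false]_(0 <= j < 4)
     (if j < size (nb N u) then
        A u (insubd u (nth 0 (nb N u) j)) && g (insubd u (nth 0 (nb N u) j))
      else false).
Proof.
move=> hA.
pose G (v : nat) := A u (insubd u v) && g (insubd u v).
have -> : \big[addb/false]_(v : 'I_(N*N)) (A u v && g v) =
          \big[addb/false]_(v < N*N | grid_adj N u v) G v.
  rewrite [RHS]big_mkcond /=; apply: eq_bigr => v _.
  rewrite /G valKd; case: (boolP (grid_adj N u v)) => // hg.
  by case: (boolP (A u v)) => // /hA; rewrite (negbTE hg).
rewrite -big_mkord -big_filter -/(nb N u).
rewrite (big_nth 0) [RHS](big_cat_nat (leq0n _) (nb_size N u)) /=.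
rewrite [X in _ = addb _ X]big1_seq ?addbF; last first.
  by move=> j /andP [_]; rewrite mem_index_iota => /andP [/leq_gtF ->].
have e : [seq x <- index_iota 0 (N*N) | grid_adj N u x] = nb N u by rewrite /index_iota subn0.
rewrite e big_nat_cond [RHS]big_nat_cond; apply: eq_bigr => j /andP [/andP [_ hj] _].
by rewrite hj.
Qed.

Lemma gatef_blk N u k : k < 10 -> gatef N (u*10+k) = nth gdum (block N u) k.
Proof.
move=> hk; rewrite /gatef divnMDl // divn_small // addn0.
by rewrite modnMDl modn_small.
Qed.

Section Blk.
Variables (N : nat) (O : oracle) (A : adjmat N) (b : bitvec N) (r : (N*N).-tuple bool).
Local Notation n := (N*N).
Local Notation Ev := (Ev N O A b r).
Local Notation W u k := (nth false Ev (wi N u k)).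

Lemma W_gate (u : 'I_n) k f p p' : k < 10 -> nth gdum (block N u) k = GBool f p p' ->
  p < wi N u k -> p' < wi N u k -> W u k = f (nth false Ev p) (nth false Ev p').
Proof.
move=> hk hb hp hp'; have hu := ltn_ord u.
apply: E_gate => //; last by rewrite gatef_blk.
nia.
Qed.

Lemma W0 (u : 'I_n) : W u 0 = b u && tnth r u.
Proof.
have hu := ltn_ord u.
rewrite (W_gate u 0 andb (n*n+u) (n*n+n+u)) //; try (rewrite /wi /mm; nia).
rewrite !E_inp ?inp_b ?inp_r //; rewrite /mm; nia.
Qed.

Lemma W1 (u : 'I_n) : W u 1 = O N A b u (+) W u 0.
Proof.
have hu := ltn_ord u.
rewrite (W_gate u 1 addb (mm N + u) (wi N u 0)) //; try (rewrite /wi /mm; nia).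
by rewrite E_s.
Qed.

Lemma Wodd (u : 'I_n) j : j < 4 -> W u (j.*2.+3) = W u (j.*2.+1) (+) W u (j.*2.+2).
Proof.
have hu := ltn_ord u.
move=> hj; rewrite (W_gate u (j.*2.+3) addb (wi N u j.*2.+1) (wi N u j.*2.+2)) //;
  try (rewrite /wi; lia).
by case: j hj => [|[|[|[|]]]].
Qed.

Lemma Wslot (u : 'I_n) j : j < 4 ->
  W u (j.*2.+2) = if j < size (nb N u) then
     A u (insubd u (nth 0 (nb N u) j)) && tnth r (insubd u (nth 0 (nb N u) j))
   else false.
Proof.
have hu := ltn_ord u.
move=> hj.
have hs : nth gdum (block N u) j.*2.+2 = slot N u j by case: j hj => [|[|[|[|]]]].
case: ifP => hjs.
  set v := nth 0 (nb N u) j.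
  have hv : v < n by exact: nb_lt.
  have ev : val (insubd u v) = v by rewrite insubdK.
  have hb : nth gdum (block N u) j.*2.+2 = GBool andb (u*n+v) (n*n+n+v) by rewrite hs /slot hjs.
  rewrite (W_gate u j.*2.+2 andb (u*n+v) (n*n+n+v) _ hb); try (rewrite /wi /mm; nia).
  rewrite !E_inp; try (rewrite /mm; nia).
  set w := insubd u v.
  have e1 : u*n + v = u*n + val w by rewrite ev.
  have e2 : n*n+n+v = n*n+n+ val w by rewrite ev.
  by rewrite e1 e2 inp_A inp_r.
have hb : nth gdum (block N u) j.*2.+2 = GBool (fun _ _ => false) 0 0 by rewrite hs /slot hjs.
by rewrite (W_gate u j.*2.+2 (fun _ _ => false) 0 0 _ hb) //; rewrite /wi; lia.
Qed.

End Blk.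

Open Scope ring_scope.

Definition sgn (c : bool) : algC := (-1) ^+ c.
Definition iph (c : bool) : algC := if c then 'i else 1.

Lemma Umx_val bi zc xc :
  Umx bi (b2o zc) (b2o xc) = (sqrtC 2)^-1 * (sgn (zc && xc) * iph (bi && xc)).
Proof.
rewrite /Umx /sgn /iph.
case: bi; rewrite ?mxE; last first.
  by case: zc; case: xc; rewrite /= ?mxE /= ?mulr1 ?expr0 ?expr1.
rewrite big_ord_recl big_ord1 /Hmx /Rzmx ?mxE.
case: zc; case: xc; rewrite /= ?muln0 ?muln1 ?expr0 ?expr1 ?mulr1 ?mulr0 ?addr0 ?add0r.
all: by rewrite ?mul1r ?mulrA.
Qed.

Lemma sgn_add a c : sgn (a (+) c) = sgn a * sgn c.
Proof. by rewrite /sgn signr_addb. Qed.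
Lemma sgn_sq a : sgn a * sgn a = 1.
Proof. by case: a; rewrite /sgn /= ?mulr1 ?expr1 ?mulrNN ?mulr1. Qed.
Lemma iph_add a c : iph (a (+) c) = iph a * iph c * sgn (a && c).
Proof.
case: a; case: c; rewrite /iph /sgn /= ?mul1r ?mulr1 ?expr0 ?expr1 //.
by rewrite -expr2 sqrCi mulrNN mulr1.
Qed.
Lemma sgn_conj a : (sgn a)^* = sgn a.
Proof. by rewrite /sgn rmorph_sign. Qed.
Lemma iph_conj a : iph a * (iph a)^* = 1.
Proof.
case: a; rewrite /iph ?rmorph1 ?mulr1 //.
by rewrite conjCi mulrN -expr2 sqrCi opprK.
Qed.

Lemma aux3 (a c S : algC) : a * c = 1 -> a * a * (c * S) = a * S.
Proof. by move=> h; rewrite -mulrA (mulrA a c) h mul1r. Qed.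

Lemma rearr6 (a b c d e f : algC) : (a*b*c)*(d*e*f) = (a*d)*(b*e)*(c*f).
Proof. ring. Qed.

Section Quantum.
Variable N : nat.
Local Notation n := (N * N)%N.
Local Notation I := 'I_(N * N).
Variables (A : adjmat N) (b : bitvec N).
Hypothesis symA : forall u v, A u v = A v u.
Hypothesis diagA : forall u, A u u = false.

Definition chi (z x : I -> bool) : algC := \prod_u sgn (z u && x u).
Definition omega (x : I -> bool) : algC :=
  \prod_(u : I) iph (b u && x u) * \prod_(u : I) \prod_(v : I | (u < v)%N && A u v) sgn (x u && x v).
Definition Mv (y : I -> bool) : {ffun I -> bool} :=
  [ffun u => (b u && y u) (+) \big[addb/false]_(v : I) (A u v && y v)].
Definition xorf (x y : I -> bool) : {ffun I -> bool} := [ffun u => x u (+) y u].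
Definition zf : {ffun I -> bool} := [ffun => false].

Lemma chiC z x : chi z x = chi x z.
Proof. by apply: eq_bigr => u _; rewrite andbC. Qed.

Lemma chi_xor z x y : chi z (xorf x y) = chi z x * chi z y.
Proof.
rewrite /chi -big_split; apply: eq_bigr => u _ /=.
rewrite ffunE -sgn_add; congr sgn; by case: (z u); case: (x u); case: (y u).
Qed.

Lemma chi0 z : chi z zf = 1.
Proof. by rewrite /chi big1 // => u _; rewrite ffunE andbF. Qed.

Lemma chi_sq z x : chi z x * chi z x = 1.
Proof. by rewrite /chi -big_split big1 // => u _ /=; rewrite sgn_sq. Qed.

Lemma sgn_big x (f : I -> bool) :
  sgn (x && \big[addb/false]_(v : I) f v) = \prod_v sgn (x && f v).
Proof.
rewrite (big_morph (fun c => sgn (x && c)) (id1 := 1) (op1 := *%R)) //.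
  by move=> c d; rewrite -sgn_add; congr sgn; case: x; case: c; case: d.
by rewrite andbF.
Qed.

Lemma B_expand x y : chi x (Mv y) =
  \prod_u sgn (x u && b u && y u) * \prod_u \prod_v sgn (x u && A u v && y v).
Proof.
rewrite /chi -big_split; apply: eq_bigr => u _ /=.
rewrite ffunE.
have -> : x u && ((b u && y u) (+) \big[addb/false]_v (A u v && y v)) =
   (x u && b u && y u) (+) (x u && \big[addb/false]_v (A u v && y v)).
  by case: (x u); case: (b u); case: (y u).
rewrite sgn_add sgn_big; congr (_ * _); apply: eq_bigr => v _.
by rewrite andbA.
Qed.

Lemma B_sym x y : chi x (Mv y) = chi y (Mv x).
Proof.
rewrite !B_expand; congr (_ * _).
  by apply: eq_bigr => u _; congr sgn; case: (x u); case: (b u); case: (y u).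
rewrite exchange_big; apply: eq_bigr => u _; apply: eq_bigr => v _.
by rewrite symA; congr sgn; case: (x v); case: (A u v); case: (y u).
Qed.

Lemma Mv_xor x y : Mv (xorf x y) = xorf (Mv x) (Mv y).
Proof.
apply/ffunP => u; rewrite !ffunE.
have -> : \big[addb/false]_v (A u v && xorf x y v) =
   \big[addb/false]_v (A u v && x v) (+) \big[addb/false]_v (A u v && y v).
  rewrite -big_split; apply: eq_bigr => v _ /=; rewrite ffunE.
  by case: (A u v); case: (x v); case: (y v).
move: (\big[addb/false]_(v < n) (A u v && x v)) (\big[addb/false]_(v < n) (A u v && y v)) => p q.
by case: (b u); case: (x u); case: (y u); case: p; case: q.
Qed.

Lemma Mv0 : Mv zf = zf.
Proof.
apply/ffunP => u; rewrite !ffunE andbF big1 // => v _; by rewrite ffunE andbF.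
Qed.

Lemma triangle (F : I -> I -> algC) : (forall u, F u u = 1) ->
  \prod_(u : I) \prod_(v : I) F u v = \prod_(u : I) \prod_(v : I | (u < v)%N) (F u v * F v u).
Proof.
move=> F1.
have E1 (u : I) : \prod_(v : I) F u v = \prod_(v : I | (u < v)%N) F u v * \prod_(v : I | (v < u)%N) F u v.
  rewrite (bigID (fun v : I => (u < v)%N)) /=; congr (_ * _).
  rewrite (bigID (fun v : I => (v < u)%N)) /= [X in _ * X]big1 ?mulr1.
    by apply: eq_bigl => v; case: ltngtP.
  move=> v /andP [] /negbTE H1 /negbTE H2.
  have -> : v = u by apply/val_inj/eqP; rewrite eqn_leq leqNgt H1 /= leqNgt H2.
  by rewrite F1.
rewrite (eq_bigr _ (fun u _ => E1 u)) big_split /=.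
rewrite [X in _ * X](exchange_big_dep xpredT) //=.
by rewrite -big_split /=; apply: eq_bigr => u _; rewrite big_split.
Qed.

Lemma omega_xor x y : omega (xorf x y) = omega x * omega y * chi x (Mv y).
Proof.
rewrite /omega B_expand.
have E1 : \prod_u iph (b u && xorf x y u) =
   \prod_u iph (b u && x u) * \prod_u iph (b u && y u) * \prod_u sgn (x u && b u && y u).
  rewrite -!big_split; apply: eq_bigr => u _ /=.
  rewrite ffunE.
  have -> : b u && (x u (+) y u) = (b u && x u) (+) (b u && y u).
    by case: (b u); case: (x u); case: (y u).
  rewrite iph_add; congr (_ * sgn _); by case: (b u); case: (x u); case: (y u).
have E2 : \prod_(u : I) \prod_(v : I | (u < v)%N && A u v) sgn (xorf x y u && xorf x y v) =
   \prod_(u : I) \prod_(v : I | (u < v)%N && A u v) sgn (x u && x v) *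
   \prod_(u : I) \prod_(v : I | (u < v)%N && A u v) sgn (y u && y v) *
   \prod_(u : I) \prod_(v : I) sgn (x u && A u v && y v).
  rewrite (triangle (fun u v => sgn (x u && A u v && y v))); last first.
    by move=> u; rewrite diagA andbF.
  rewrite -!big_split; apply: eq_bigr => u _ /=.
  rewrite [LHS]big_mkcond [X in _ = X * _ * _]big_mkcond [X in _ = _ * X * _]big_mkcond [X in _ = _ * _ * X]big_mkcond -!big_split /=; apply: eq_bigr => v _.
  rewrite (symA v u) !ffunE.
  case: (u < v)%N; rewrite ?mulr1 //=.
  case: (A u v); rewrite ?andbF ?mulr1 //=.
  rewrite -!sgn_add; congr sgn.
  by case: (x u); case: (x v); case: (y u); case: (y v).
rewrite E1 E2; exact: rearr6.
Qed.

Lemma omega_conj x : omega x * (omega x)^* = 1.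
Proof.
rewrite /omega rmorphM /= !rmorph_prod /=.
rewrite mulrACA -big_split big1 ?mul1r; last by move=> u _; rewrite /= iph_conj.
rewrite -big_split big1 // => u _ /=.
rewrite rmorph_prod -big_split big1 // => v _ /=.
by rewrite sgn_conj sgn_sq.
Qed.

Lemma omega0 : omega zf = 1.
Proof.
rewrite /omega !big1 ?mulr1 // => u _.
  by rewrite big1 // => v _; rewrite ffunE.
by rewrite ffunE andbF.
Qed.


Lemma sum_chi (w : {ffun I -> bool}) :
  \sum_(x : {ffun I -> bool}) chi x w = (w == zf)%:R * 2%:R ^+ n.
Proof.
rewrite /chi -(bigA_distr_bigA (fun u c => sgn (c && w u))) /=.
case: (eqVneq w zf) => [->|nz].
  rewrite ?eqxx ?mul1r (eq_bigr (fun _ => 2%:R)); first by rewrite prodr_const card_ord.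
  by move=> u _; rewrite big_bool ffunE /sgn /= expr0.
have [u wu] : exists u, w u.
  case: (pickP (fun u => w u)) => [u wu|H]; first by exists u.
  have wz : w = zf by apply/ffunP => u; rewrite ffunE H.
  by move: nz; rewrite wz eqxx.
rewrite /= mulr0n mul0r (bigD1 u) //= big_bool /= wu /sgn /= expr1 expr0 addNr mul0r.
done.
Qed.


Lemma sqrt2_inv2 : (sqrtC 2)^-1 ^+ n * (sqrtC 2)^-1 ^+ n = (2^-1 : algC) ^+ n.
Proof. by rewrite -exprMn -invfM -expr2 sqrtCK. Qed.

Lemma amp_formula (z : bitvec N) : outcome_amp A b z =
  (2^-1)^+n * \sum_(x : {ffun I -> bool}) omega x * chi z x.
Proof.
rewrite /outcome_amp mulr_sumr; apply: eq_bigr => x _.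
rewrite (eq_bigr (fun u => (sqrtC 2)^-1 * (sgn (z u && x u) * iph (b u && x u)))); last first.
  by move=> u _; rewrite Umx_val.
rewrite big_split /= prodr_const card_ord big_split /= /graph_amp /omega /chi -sqrt2_inv2.
set P := \prod_(i : I) sgn _. set Q := \prod_(i : I) iph _. 
set R := \prod_(u : I) \prod_(v : I | _) _.
rewrite -/R; ring.
Qed.

Lemma chi_conj z x : (chi z x)^* = chi z x.
Proof. by rewrite rmorph_prod; apply: eq_bigr => u _; rewrite /= sgn_conj. Qed.

Lemma xorfK (x : I -> bool) :
  cancel (fun y : {ffun I -> bool} => xorf x y) (fun y : {ffun I -> bool} => xorf x y).
Proof. by move=> y; apply/ffunP => u; rewrite !ffunE addKb. Qed.

Lemma sq_sum (z : bitvec N) :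
  (\sum_(x : {ffun I -> bool}) omega x * chi z x) *
  (\sum_(x : {ffun I -> bool}) (omega x * chi z x)^*) =
  2%:R ^+ n * \sum_(y : {ffun I -> bool} | Mv y == zf) omega y * chi z y.
Proof.
rewrite mulr_suml.
rewrite (eq_bigr (fun x : {ffun I -> bool} => \sum_(x' : {ffun I -> bool}) (omega x * chi z x) * (omega x' * chi z x')^*));
  last by move=> x _; rewrite mulr_sumr.
rewrite exchange_big /=.
rewrite (eq_bigr (fun x' : {ffun I -> bool} => \sum_(y : {ffun I -> bool}) omega y * chi z y * chi x' (Mv y))); last first.
  move=> x' _; rewrite (reindex_inj (can_inj (xorfK x'))) /=.
  apply: eq_bigr => y _.
  rewrite omega_xor chi_xor rmorphM /= (chi_conj z x').
  have -> : omega x' * omega y * chi x' (Mv y) * (chi z x' * chi z y) *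
      ((omega x')^* * chi z x') =
      (omega x' * (omega x')^*) * (chi z x' * chi z x') * (omega y * chi z y * chi x' (Mv y)).
    by ring.
  by rewrite omega_conj chi_sq !mul1r.
rewrite exchange_big /=.
rewrite (eq_bigr (fun y : {ffun I -> bool} => omega y * chi z y * ((Mv y == zf)%:R * 2%:R ^+ n))); last first.
  by move=> y _; rewrite -mulr_sumr sum_chi.
rewrite mulr_sumr [RHS]big_mkcond /=; apply: eq_bigr => y _.
case: (Mv y == zf); last by rewrite mulr0n mul0r mulr0.
by rewrite mul1r mulrC.
Qed.

Lemma prob_formula (z : bitvec N) : outcome_prob A b z =
  (2^-1)^+n * \sum_(y : {ffun I -> bool} | Mv y == zf) omega y * chi z y.
Proof.
rewrite /outcome_prob normCK amp_formula rmorphM rmorphXn fmorphV /= conjC_nat.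
rewrite rmorph_sum /= mulrACA sq_sum.
apply: aux3; rewrite -exprMn mulVf ?expr1n //.
by rewrite pnatr_eq0.
Qed.


Definition Sz (z : bitvec N) := \sum_(y : {ffun I -> bool} | Mv y == zf) omega y * chi z y.
Definition Kc := #|[pred y : {ffun I -> bool} | Mv y == zf]|.

Lemma xor0f (w : {ffun I -> bool}) : xorf zf w = w.
Proof. by apply/ffunP => u; rewrite !ffunE. Qed.

Lemma xorf_eq (x y : {ffun I -> bool}) : (xorf x y == x :> {ffun I -> bool}) = (y == zf).
Proof.
apply/eqP/eqP => [/ffunP H|->]; apply/ffunP => u.
  by move: (H u); rewrite !ffunE; case: (x u); case: (y u).
by rewrite !ffunE addbF.
Qed.

Lemma S_cases z : Sz z = 0 \/ Sz z = Kc%:R.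
Proof.
pose h y := omega y * chi z y.
have hmul y y' : Mv y' == zf -> h (xorf y y') = h y * h y'.
  by move=> /eqP k; rewrite /h omega_xor chi_xor k chi0 mulr1; ring.
case: (boolP [forall y : {ffun I -> bool}, (Mv y == zf) ==> (h y == 1)]) => [/forallP H|].
  right; rewrite /Sz (eq_bigr (fun _ => 1)); first by rewrite sumr_const.
  by move=> y ky; exact/eqP/(implyP (H y) ky).
case/forallPn => y0; rewrite negb_imply => /andP [k0 h0].
left.
have E : Sz z = h y0 * Sz z.
  rewrite /Sz [LHS](reindex_inj (can_inj (xorfK y0))) /= mulr_sumr.
  apply: eq_big => y; first by rewrite Mv_xor (eqP k0) xor0f.
  move=> ky; have ky2 : Mv y == zf by move: ky; rewrite Mv_xor (eqP k0) xor0f.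
  by have := hmul y0 y ky2; rewrite /h => ->.
have : Sz z * (1 - h y0) = 0 by rewrite mulrBr mulr1 {1}E mulrC subrr.
by move/eqP; rewrite mulf_eq0 subr_eq0 [1 == _]eq_sym (negbTE h0) orbF => /eqP.
Qed.

Lemma S_shift z w : Sz (xorf z (Mv w)) = Sz z.
Proof.
rewrite /Sz; apply: eq_bigr => y ky; congr (_ * _).
by rewrite chiC chi_xor -B_sym (eqP ky) chi0 mulr1 chiC.
Qed.

Lemma sum_prob : \sum_(z : {ffun I -> bool}) outcome_prob A b z = 1.
Proof.
under eq_bigr do rewrite prob_formula.
rewrite -mulr_sumr exchange_big /=.
under eq_bigr do rewrite -mulr_sumr sum_chi.
rewrite (bigD1 zf) ?Mv0 //= big1 ?addr0; last first.
  by move=> y /andP [_ /negbTE ->]; rewrite mul0r mulr0.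
rewrite omega0 eqxx !mul1r -exprMn mulVf ?expr1n //.
by rewrite pnatr_eq0.
Qed.

Definition cnt (s : bitvec N) (z : {ffun I -> bool}) :=
  #|[pred r : {ffun I -> bool} | xorf s (Mv r) == z]|.

Lemma cnt_coset s w : cnt s (xorf s (Mv w)) = Kc.
Proof.
rewrite /cnt /Kc -!sum1_card (reindex_inj (can_inj (xorfK w))) /=.
apply: eq_bigl => r; rewrite !inE Mv_xor.
have -> : xorf s (xorf (Mv w) (Mv r)) = xorf (xorf s (Mv w)) (Mv r).
  by apply/ffunP => u; rewrite !ffunE addbA.
exact: xorf_eq.
Qed.


Lemma cnt_sum s : \sum_(z : {ffun I -> bool}) cnt s z = (2 ^ n)%N.
Proof.
rewrite /cnt.
under eq_bigr do rewrite -sum1_card big_mkcond /=.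
rewrite exchange_big /=.
under eq_bigr => r _.
  rewrite -big_mkcond /=.
  rewrite (big_pred1 (xorf s (Mv r))); last by move=> z; rewrite !inE eq_sym.
over.
by rewrite sum1_card card_ffun card_bool card_ord.
Qed.

Lemma main_dist (s : bitvec N) : outcome_prob A b s != 0 ->
  forall z : {ffun I -> bool}, outcome_prob A b z = (cnt s z)%:R / (2 ^ n)%N%:R.
Proof.
move=> ps.
have Ss : Sz s = Kc%:R.
  case: (S_cases s) => // S0; move: ps.
  by rewrite prob_formula -/(Sz s) S0 mulr0 eqxx.
have pK z : (exists w, z = xorf s (Mv w)) -> outcome_prob A b z = (cnt s z)%:R / (2 ^ n)%N%:R.
  case=> w ->; rewrite cnt_coset prob_formula -/(Sz _) S_shift Ss.
  by rewrite natrX exprVn mulrC.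
have d_ge0 (z : {ffun I -> bool}) : 0 <= outcome_prob A b z - (cnt s z)%:R / (2 ^ n)%N%:R.
  case: (boolP (cnt s z == 0%N)) => [/eqP->|nz].
    by rewrite mul0r subr0 /outcome_prob exprn_ge0 ?normr_ge0.
  have : exists w, z = xorf s (Mv w).
    by move: nz; rewrite -lt0n => /card_gt0P [w]; rewrite inE => /eqP <-; exists w.
  by move/pK => ->; rewrite subrr.
have sum0 : \sum_(z : {ffun I -> bool}) (outcome_prob A b z - (cnt s z)%:R / (2 ^ n)%N%:R) = 0.
  rewrite sumrB sum_prob -mulr_suml -natr_sum cnt_sum mulfV ?subrr //.
  by rewrite pnatr_eq0 expn_eq0.
move=> z; apply/eqP; rewrite -subr_eq0; apply/eqP.
exact: (psumr_eq0P (P := predT) (fun z _ => d_ge0 z) sum0).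
Qed.

End Quantum.

Close Scope ring_scope.

Section Out.
Variables (N : nat) (O : oracle) (A : adjmat N) (b : bitvec N) (r : (N*N).-tuple bool).
Local Notation n := (N*N).
Local Notation Ev := (Ev N O A b r).
Local Notation W u k := (nth false Ev (wi N u k)).
Hypothesis valid : forall u v, A u v -> grid_adj N u v.

Lemma W9 (u : 'I_n) : W u 9 =
  O N A b u (+) ((b u && tnth r u) (+) \big[addb/false]_(v : 'I_n) (A u v && tnth r v)).
Proof.
have h9 : W u 9 = W u 7 (+) W u 8 := Wodd N O A b r u 3 isT.
have h7 : W u 7 = W u 5 (+) W u 6 := Wodd N O A b r u 2 isT.
have h5 : W u 5 = W u 3 (+) W u 4 := Wodd N O A b r u 1 isT.
have h3 : W u 3 = W u 1 (+) W u 2 := Wodd N O A b r u 0 isT.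
have s2 := Wslot N O A b r u 0 isT.
have s4 := Wslot N O A b r u 1 isT.
have s6 := Wslot N O A b r u 2 isT.
have s8 := Wslot N O A b r u 3 isT.
rewrite /= in s2 s4 s6 s8.
rewrite h9 h7 h5 h3 s2 s4 s6 s8 W1 W0.
rewrite (@nb_sum N A (fun v => tnth r v) u (valid u)).
rewrite big_nat_recl // big_nat_recl // big_nat_recl // big_nat_recl // big_geq //.
by rewrite !addbA addbF.
Qed.

Definition rf : {ffun 'I_n -> bool} := [ffun u => tnth r u].

Lemma circ_out : circ_output (Circ N) O (encode A b r) =
  [seq xorf N (O N A b) (Mv N A b rf) u | u <- enum 'I_n].
Proof.
rewrite /circ_output eval_E /= -val_enum_ord -!map_comp.
apply: eq_map => u /=.
rewrite W9 !ffunE; congr (_ (+) _); congr (_ (+) _).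
apply: eq_bigr => v _; by rewrite ffunE.
Qed.

End Out.

Open Scope ring_scope.

Lemma map_enum_eq n (f g : 'I_n -> bool) :
  ([seq f u | u <- enum 'I_n] == [seq g u | u <- enum 'I_n]) = (finfun f == finfun g).
Proof.
apply/eqP/eqP => H.
  apply/ffunP => u; rewrite !ffunE.
  by move/eq_in_map: H => H; apply: H; rewrite mem_enum.
apply/eq_in_map => u _.
by have := congr1 (fun h : {ffun 'I_n -> bool} => h u) H; rewrite !ffunE.
Qed.

Lemma finfunK' n (F : {ffun 'I_n -> bool}) : finfun (fun u => F u) = F.
Proof. by apply/ffunP => u; rewrite ffunE. Qed.

Lemma circ_prob_eq N (O : oracle) (A : adjmat N) (b z : bitvec N) :
  (forall u v, A u v -> grid_adj N u v) ->
  circ_prob (Circ N) O A b z =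
  (cnt N A b (O N A b) (finfun z))%:R / (2 ^ (N*N))%N%:R.
Proof.
move=> valid.
rewrite /circ_prob /=; congr (_%:R / _).
have bij : bijective (fun r : (N*N)%N.-tuple bool => rf N r).
  exists (fun f : {ffun 'I_(N*N)%N -> bool} => [tuple f u | u < (N*N)%N]).
    by move=> r; apply: eq_from_tnth => u; rewrite tnth_mktuple ffunE.
  by move=> f; apply/ffunP => u; rewrite ffunE tnth_mktuple.
rewrite cardsE /cnt -!sum1_card (reindex (fun r => rf N r)) /=; last exact: onW_bij.
apply: eq_bigl => r; rewrite unfold_in /= circ_out // -/(eq_op _ _) map_enum_eq finfunK'.
done.
Qed.

Close Scope ring_scope.

Definition gdb (ds : seq nat) (g : gate) := if isb g then gate_depth ds g else [:: 0].
Lemma gdb1 ds g : size (gdb ds g) = 1.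
Proof. by rewrite /gdb; case: g. Qed.
Lemma gdbE ds f p p' :
  nth 0 (gdb ds (GBool f p p')) 0 = (maxn (nth 0 ds p) (nth 0 ds p')).+1.
Proof. by []. Qed.

Section Depth.
Variable N : nat.
Local Notation n := (N*N).
Definition D0 := nseq (mm N) 0 ++ nseq n 1.
Definition Dv := run gdb D0 (Gs N).

Lemma size_D0 : size D0 = mm N + n.
Proof. by rewrite size_cat !size_nseq. Qed.

Lemma depths_E : wire_depths (input_len N (Circ N)) (gates (Circ N)) = Dv.
Proof.
rewrite /wire_depths /Dv /D0 /=.
have -> : \max_(i <- iota 0 (N * N * (N * N) + N * N)) nth 0 (nseq (mm N) 0) i = 0.
  by apply: big1_seq => i _; rewrite nth_nseq; case: ifP.
rewrite -/(run gate_depth _ _); apply: (@run_ext _ _ _ isb); first exact: Gs_isb.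
by move=> acc g hg; rewrite /gdb hg.
Qed.

Lemma D_low i : i < mm N -> nth 0 Dv i = 0.
Proof.
move=> h; rewrite /Dv run_prefix ?size_D0; last by lia.
by rewrite nth_cat size_nseq h nth_nseq h.
Qed.

Lemma D_s i : i < n -> nth 0 Dv (mm N + i) = 1.
Proof.
move=> h; rewrite /Dv run_prefix ?size_D0; last by lia.
by rewrite nth_cat size_nseq ltnNge leq_addr /= addKn nth_nseq h.
Qed.

Lemma D_gate i f p p' : i < n*10 -> gatef N i = GBool f p p' ->
  p < mm N + n + i -> p' < mm N + n + i ->
  nth 0 Dv (mm N + n + i) = (maxn (nth 0 Dv p) (nth 0 Dv p')).+1.
Proof.
move=> hi hg hp hp'.
have P1 j : j < mm N + n + i ->
    nth 0 Dv j = nth 0 (run gdb D0 (take i (Gs N))) j.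
  move=> hj; apply: run_nth_prefix; first exact: gdb1.
    by rewrite size_Gs ltnW.
  by rewrite size_D0.
rewrite (P1 p hp) (P1 p' hp') /Dv -size_D0.
rewrite (@run_nth _ 0 _ gdb1 _ _ _ gdum); last by rewrite size_Gs.
by rewrite nth_Gs // hg gdbE.
Qed.

Lemma D_blk (u : 'I_n) k f p p' : k < 10 -> nth gdum (block N u) k = GBool f p p' ->
  p < wi N u k -> p' < wi N u k ->
  nth 0 Dv (wi N u k) = (maxn (nth 0 Dv p) (nth 0 Dv p')).+1.
Proof.
move=> hk hb hp hp'; have hu := ltn_ord u.
have hi : u * 10 + k < n * 10 by nia.
have hg : gatef N (u*10+k) = GBool f p p' by rewrite gatef_blk.
exact: (D_gate _ _ _ _ hi hg hp hp').
Qed.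

Lemma D_slot (u : 'I_n) j : j < 4 -> nth 0 Dv (wi N u j.*2.+2) = 1.
Proof.
have hu := ltn_ord u.
move=> hj.
have hs : nth gdum (block N u) j.*2.+2 = slot N u j by case: j hj => [|[|[|[|]]]].
case: (boolP (j < size (nb N u))) => hjs.
  set v := nth 0 (nb N u) j.
  have hv : v < n by exact: nb_lt.
  have hb : nth gdum (block N u) j.*2.+2 = GBool andb (u*n+v) (n*n+n+v) by rewrite hs /slot hjs.
  rewrite (D_blk u j.*2.+2 andb (u*n+v) (n*n+n+v) _ hb); try (rewrite /wi /mm; nia).
  rewrite !D_low //; rewrite /mm; nia.
have hb : nth gdum (block N u) j.*2.+2 = GBool (fun _ _ => false) 0 0 by rewrite hs /slot (negbTE hjs).
rewrite (D_blk u j.*2.+2 (fun _ _ => false) 0 0 _ hb); try (rewrite /wi; lia).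
rewrite D_low //; rewrite /mm; nia.
Qed.

Lemma D_odd (u : 'I_n) j : j < 4 ->
  nth 0 Dv (wi N u j.*2.+3) = (maxn (nth 0 Dv (wi N u j.*2.+1)) (nth 0 Dv (wi N u j.*2.+2))).+1.
Proof.
have hu := ltn_ord u.
move=> hj; rewrite (D_blk u (j.*2.+3) addb (wi N u j.*2.+1) (wi N u j.*2.+2)) //;
  try (rewrite /wi; lia).
by case: j hj => [|[|[|[|]]]].
Qed.

Lemma D9 (u : 'I_n) : nth 0 Dv (wi N u 9) <= 6.
Proof.
have hu := ltn_ord u.
have d0 : nth 0 Dv (wi N u 0) = 1.
  rewrite (D_blk u 0 andb (n*n+u) (n*n+n+u)) //; try (rewrite /wi /mm; nia).
  rewrite !D_low //; rewrite /mm; nia.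
have d1 : nth 0 Dv (wi N u 1) = 2.
  rewrite (D_blk u 1 addb (mm N + u) (wi N u 0)) //; try (rewrite /wi /mm; nia).
  by rewrite D_s // d0.
have d3 : nth 0 Dv (wi N u 3) = 3.
  by rewrite (D_odd u 0 isT) d1 (D_slot u 0 isT).
have d5 : nth 0 Dv (wi N u 5) = 4.
  by rewrite (D_odd u 1 isT) d3 (D_slot u 1 isT).
have d7 : nth 0 Dv (wi N u 7) = 5.
  by rewrite (D_odd u 2 isT) d5 (D_slot u 2 isT).
by rewrite (D_odd u 3 isT) d7 (D_slot u 3 isT).
Qed.

Lemma depth_bound : circuit_depth N (Circ N) <= 6.
Proof.
rewrite /circuit_depth depths_E /=.
apply/bigmax_leqP_seq => o /mapP [u hu ->] _.
rewrite mem_iota add0n in hu.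
exact: (D9 (Ordinal hu)).
Qed.

End Depth.

Open Scope ring_scope.

Lemma size_bound N : (circuit_size (Circ N) <= 34 * N ^ 34 + 34)%N.
Proof.
rewrite /circuit_size /= big_cons /= size_iota size_map size_iota.
have -> : (\sum_(g <- Gs N) gate_size g = (N*N*10) * 3)%N.
  rewrite /Gs /mkseq big_map (eq_bigr (fun _ => 3%N)); last first.
    by move=> i _; case: (isbP _ (gatef_isb N i)) => f [p [q ->]].
  by rewrite big_const_seq count_predT size_iota iter_addn_0 mulnC.
case: N => [|N] //.
set x := (N.+1 * N.+1)%N.
have h1 : (x <= N.+1 ^ 34)%N.
  by rewrite /x mulnn (leq_pexp2l (ltn0Sn N)).
have h2 : (x * x <= N.+1 ^ 34)%N.
  by rewrite mulnn /x mulnn -expnM (leq_pexp2l (ltn0Sn N)).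
lia.
Qed.

Theorem mainTheorem11 :
  exists (d c : nat) (C : nat -> circuit),
    forall N : nat,
      (circuit_depth N (C N) <= d)%N /\
      (circuit_size (C N) <= c * N ^ c + c)%N /\
      forall O : oracle, solves_RelHLF O ->
      forall (A : adjmat N) (b : bitvec N), valid_instance A ->
      forall z : bitvec N, circ_prob (C N) O A b z = outcome_prob A b z.
Proof.
exists 6%N, 34%N, Circ => N; split; first exact: depth_bound.
split; first exact: size_bound.
move=> O hO A b hv z.
have ps := hO N A b hv.
case: hv => [symA [diagA validA]].
rewrite circ_prob_eq // -(@main_dist N A b symA diagA _ ps (finfun z)).
have E : ([ffun u => z u] : 'I_(N*N)%N -> bool) = z.
  by apply: functional_extensionality => u; rewrite ffunE.
by rewrite E.
Qed.
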